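(* (a) For every MT-algebra $M$, the map $1_M$ is a proximity morphism $M\to M$. (b) If $f:M_1\to M_2$ and $g:M_2\to M_3$ are proximity morphisms, then $g\star f:M_1\to M_3$ is a proximity morphism. (c) For proximity morphisms $f:M_1\to M_2$, $g:M_2\to M_3$, $h:M_3\to M_4$ and every $a\in M_1$, $((h\star g)\star f)(a)=\bigvee\{h(g(f(x))):x\in\mathcal{LC}M_1,\ x\le a\}=(h\star(g\star f))(a)$. (d) For every proximity morphism $f:M\to N$, $1_N\star f=f=f\star 1_M$. Consequently, MT-algebras with proximity morphisms, composition $\star$ and identities $1_M$ form a category $\mathbf{MT_P}$.
   Context: An MT-algebra is a pair $(M,\square)$ where $M$ is a complete boolean algebra and $\square:M\to M$ satisfies $\square 1=1$, $\square(a\wedge b)=\square a\wedge\square b$, $\square a\le a$, $\square a\le\square\square a$. Write $\Diamond a=\neg\square\neg a$. An element $a$ is open if $\square a=a$ and locally closed if $a=\square b\wedge\Diamond c$ for some $b,c\in M$; $\mathcal O M$, $\mathcal{LC} M$ denote the sets of open and locally closed elements; $\mathcal O M$ is a frame. A proximity morphism between MT-algebras $M,N$ is a map $f:M\to N$ such that: (P1) $f$ maps $\mathcal O M$ into $\mathcal O N$ and $f|_{\mathcal O M}$ is a frame morphism; (P2) $f(a\wedge b)=f(a)\wedge f(b)$; (P3) $f(\bigvee S)=\bigvee f[S]$ for every finite $S\subseteq\mathcal{LC}M$; (P4) $f(a)=\bigvee\{f(x): x\in\mathcal{LC}M,\ x\le a\}$ for every $a\in M$. For proximity morphisms $f:M_1\to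 M_2$, $g:M_2\to M_3$ define $(g\star f)(a)=\bigvee\{g(f(x)): x\in\mathcal{LC}M_1,\ x\le a\}$. For an MT-algebra $M$ define $1_M:M\to M$ by $1_M(a)=\bigvee\{x\in\mathcal{LC}M: x\le a\}$. *)

(* Defs.v *)
From Stdlib Require Import List.
Set Implicit Arguments.

Record CBA := {
  car :> Type;
  le : car -> car -> Prop;
  meet : car -> car -> car;
  join : car -> car -> car;
  top : car;
  bot : car;
  compl : car -> car;
  sup : (car -> Prop) -> car;
  le_refl : forall a, le a a;
  le_antisym : forall a b, le a b -> le b a -> a = b;
  le_trans : forall a b c, le a b -> le b c -> le a c;
  meet_glb : forall a b c, le c (meet a b) <-> (le c a /\ le c b);
  join_lub : forall a b c, le (join a b) c <-> (le a c /\ le b c);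
  top_max : forall a, le a top;
  bot_min : forall a, le bot a;
  distr : forall a b c, meet a (join b c) = join (meet a b) (meet a c);
  compl_meet : forall a, meet a (compl a) = bot;
  compl_join : forall a, join a (compl a) = top;
  sup_lub : forall (S : car -> Prop) c,
      le (sup S) c <-> (forall x, S x -> le x c)
}.

Record MTAlgebra := {
  cba :> CBA;
  box : cba -> cba;
  box_top : box (top cba) = top cba;
  box_meet : forall a b, box (meet cba a b) = meet cba (box a) (box b);
  box_defl : forall a, le cba (box a) a;
  box_idem : forall a, le cba (box a) (box (box a))
}.

Definition dia {M : MTAlgebra} (a : M) : M := compl M (box M (compl M a)).

Definition is_open {M : MTAlgebra} (a : M) : Prop := box M a = a.

Definition is_LC {M : MTAlgebra} (a : M) : Prop :=
  exists b c : M, a = meet M (box M b) (dia c).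

Definition img (A B : Type) (f : A -> B) (S : A -> Prop) : B -> Prop :=
  fun y => exists x, S x /\ y = f x.

(* Proximity morphism (P1)-(P4).  (P1): f maps opens to opens and its
   restriction to the frame O M is a frame morphism; joins and finite meets
   in O M are computed as in M (opens are closed under them). *)
Definition proximity {M N : MTAlgebra} (f : M -> N) : Prop :=
  (forall a : M, is_open a -> is_open (f a)) /\
  f (top M) = top N /\
  (forall a b : M, is_open a -> is_open b -> f (meet M a b) = meet N (f a) (f b)) /\
  (forall S : M -> Prop, (forall x, S x -> is_open x) ->
      f (sup M S) = sup N (img f S)) /\
  (forall a b : M, f (meet M a b) = meet N (f a) (f b)) /\
  (* P3: finite sets of locally closed elements, given as lists *)
  (forall s : list M, (forall x, In x s -> is_LC x) ->
      f (sup M (fun x => In x s)) = sup N (img f (fun x => In x s))) /\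
  (forall a : M, f a = sup N (img f (fun x => is_LC x /\ le M x a))).

Definition star {M1 M2 M3 : MTAlgebra} (g : M2 -> M3) (f : M1 -> M2) : M1 -> M3 :=
  fun a => sup M3 (img (fun x => g (f x)) (fun x => is_LC x /\ le M1 x a)).

Definition idP (M : MTAlgebra) : M -> M :=
  fun a => sup M (fun x => is_LC x /\ le M x a).

(* Main.v *)
Require Import Defs.
From Stdlib Require Import List FunctionalExtensionality.

Section CBAfacts.
Variable B : CBA.
Local Notation "x <= y" := (le B x y).
Local Notation "x /\' y" := (meet B x y) (at level 40).
Local Notation "x \/' y" := (join B x y) (at level 45).
Local Notation "- x" := (compl B x).

Lemma ml a b : a /\' b <= a.
Proof. pose proof (le_refl B (a /\' b)) as H. apply meet_glb in H. tauto. Qed.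
Lemma mr a b : a /\' b <= b.
Proof. pose proof (le_refl B (a /\' b)) as H. apply meet_glb in H. tauto. Qed.
Lemma jl a b : a <= a \/' b.
Proof. pose proof (le_refl B (a \/' b)) as H. apply join_lub in H. tauto. Qed.
Lemma jr a b : b <= a \/' b.
Proof. pose proof (le_refl B (a \/' b)) as H. apply join_lub in H. tauto. Qed.
Lemma mglb a b c : c <= a -> c <= b -> c <= a /\' b.
Proof. intros. apply meet_glb. tauto. Qed.
Lemma jlub a b c : a <= c -> b <= c -> a \/' b <= c.
Proof. intros. apply join_lub. tauto. Qed.
Lemma tr a b c : a <= b -> b <= c -> a <= c.
Proof. apply le_trans. Qed.
Lemma mC a b : a /\' b = b /\' a.
Proof. apply le_antisym; apply mglb; (apply mr || apply ml). Qed.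
Lemma jC a b : a \/' b = b \/' a.
Proof. apply le_antisym; apply jlub; (apply jr || apply jl). Qed.
Lemma mA a b c : a /\' (b /\' c) = (a /\' b) /\' c.
Proof.
  apply le_antisym.
  - apply mglb; [apply mglb|].
    + apply ml.
    + eapply tr; [apply mr|apply ml].
    + eapply tr; [apply mr|apply mr].
  - apply mglb; [|apply mglb].
    + eapply tr; [apply ml|apply ml].
    + eapply tr; [apply ml|apply mr].
    + apply mr.
Qed.
Lemma mmono a b c d : a <= b -> c <= d -> a /\' c <= b /\' d.
Proof. intros. apply mglb; eapply tr; [apply ml| |apply mr|]; auto. Qed.
Lemma le_meet_eq a b : a <= b -> a /\' b = a.
Proof. intros. apply le_antisym. apply ml. apply mglb; auto using le_refl. Qed.
Lemma meet_top a : a /\' top B = a.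
Proof. apply le_meet_eq, top_max. Qed.
Lemma join_bot a : a \/' bot B = a.
Proof. apply le_antisym. apply jlub. apply le_refl. apply bot_min. apply jl. Qed.
Lemma le_bot a : a <= bot B -> a = bot B.
Proof. intros. apply le_antisym; auto using bot_min. Qed.
Lemma le_top a : top B <= a -> a = top B.
Proof. intros. apply le_antisym; auto using top_max. Qed.

Lemma resid a b c : a /\' b <= c <-> b <= (- a) \/' c.
Proof.
  split; intro H.
  - rewrite <- (meet_top b), <- (compl_join B a), distr.
    apply jlub.
    + eapply tr; [|apply jr]. rewrite mC. auto.
    + eapply tr; [apply mr|apply jl].
  - eapply tr. apply (mmono a a b _ (le_refl B a) H).
    rewrite distr, compl_meet. apply jlub. apply bot_min. apply mr.
Qed.

Lemma compl_uniq a b : a /\' b = bot B -> a \/' b = top B -> b = - a.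
Proof.
  intros H1 H2. apply le_antisym.
  - rewrite <- (meet_top b), <- (compl_join B a), distr, (mC b a), H1.
    apply jlub. apply bot_min. apply mr.
  - rewrite <- (meet_top (- a)), <- H2, distr, mC, compl_meet.
    apply jlub. apply bot_min. apply mr.
Qed.

Lemma ccompl a : - (- a) = a.
Proof.
  symmetry. apply compl_uniq. rewrite mC. apply compl_meet.
  rewrite jC. apply compl_join.
Qed.

Lemma le_compl c d : c <= - d <-> d /\' c <= bot B.
Proof. rewrite resid, join_bot. tauto. Qed.

Lemma compl_anti a b : a <= b -> - b <= - a.
Proof.
  intros. apply le_compl. eapply tr. apply mmono. eassumption. apply le_refl.
  rewrite compl_meet. apply le_refl.
Qed.

Lemma demorgan x y : (- x) /\' (- y) = - (x \/' y).
Proof.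
  apply le_antisym.
  - apply le_compl. rewrite mC, distr. apply jlub.
    + eapply tr; [apply mmono; [apply ml|apply le_refl]|]; rewrite mC, compl_meet; apply le_refl.
    + eapply tr; [apply mmono; [apply mr|apply le_refl]|]; rewrite mC, compl_meet; apply le_refl.
  - apply mglb; apply compl_anti; (apply jl || apply jr).
Qed.

Lemma sup_ub (S : B -> Prop) x : S x -> x <= sup B S.
Proof. intros. pose proof (le_refl B (sup B S)) as H0. rewrite sup_lub in H0. auto. Qed.
Lemma sup_le (S : B -> Prop) c : (forall x, S x -> x <= c) -> sup B S <= c.
Proof. apply sup_lub. Qed.
Lemma sup_mono (S T : B -> Prop) :
  (forall x, S x -> exists y, T y /\ x <= y) -> sup B S <= sup B T.
Proof.
  intros H. apply sup_le. intros x Hx. destruct (H x Hx) as [y [Hy Hxy]].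
  eapply tr. eauto. apply sup_ub. auto.
Qed.
Lemma sup_ext (S T : B -> Prop) : (forall x, S x <-> T x) -> sup B S = sup B T.
Proof.
  intros H. apply le_antisym; apply sup_mono; intros x Hx; exists x;
  split; auto using le_refl; apply H; auto.
Qed.

Lemma meet_sup_le a (S : B -> Prop) c :
  (forall s, S s -> a /\' s <= c) -> a /\' sup B S <= c.
Proof. intros H. apply resid, sup_le. intros. apply resid. auto. Qed.

Lemma meet_sup2_le (S T : B -> Prop) c :
  (forall s t, S s -> T t -> s /\' t <= c) -> sup B S /\' sup B T <= c.
Proof.
  intros H. apply meet_sup_le. intros t Ht. rewrite mC. apply meet_sup_le.
  intros s Hs. rewrite mC. auto.
Qed.

Lemma sup_empty : sup B (fun x => In x nil) = bot B.
Proof. apply le_bot, sup_le. intros x []. Qed.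

Lemma sup_pair x y : sup B (fun z => In z (x :: y :: nil)) = x \/' y.
Proof.
  apply le_antisym.
  - apply sup_le. intros z [->|[->|[]]]. apply jl. apply jr.
  - apply jlub; apply sup_ub; simpl; auto.
Qed.
End CBAfacts.

Section MTfacts.
Variable M : MTAlgebra.
Local Notation "x <= y" := (le M x y).
Local Notation "x /\' y" := (meet M x y) (at level 40).
Local Notation "x \/' y" := (join M x y) (at level 45).
Local Notation "- x" := (compl M x).

Lemma box_mono (a b : M) : a <= b -> box M a <= box M b.
Proof.
  intros H. rewrite <- (le_meet_eq _ _ _ H), box_meet. apply mr.
Qed.
Lemma box_box (a : M) : box M (box M a) = box M a.
Proof. apply le_antisym. apply box_defl. apply box_idem. Qed.
Lemma open_box (a : M) : is_open (box M a).
Proof. apply box_box. Qed.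
Lemma open_top : is_open (top M).
Proof. apply box_top. Qed.
Lemma box_bot : box M (bot M) = bot M.
Proof. apply le_bot, box_defl. Qed.
Lemma open_join (a b : M) : is_open a -> is_open b -> is_open (a \/' b).
Proof.
  unfold is_open; intros Ha Hb. apply le_antisym. apply box_defl.
  apply jlub.
  - rewrite <- Ha at 1. apply box_mono, jl.
  - rewrite <- Hb at 1. apply box_mono, jr.
Qed.
Lemma open_meet (a b : M) : is_open a -> is_open b -> is_open (a /\' b).
Proof. unfold is_open; intros Ha Hb. rewrite box_meet, Ha, Hb. auto. Qed.
Lemma open_sup (S : M -> Prop) : (forall x, S x -> is_open x) -> is_open (sup M S).
Proof.
  intros H. apply le_antisym. apply box_defl. apply sup_le. intros x Hx.
  rewrite <- (H x Hx). apply box_mono, sup_ub; auto.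
Qed.
Lemma dia_open_compl (u : M) : is_open u -> dia (- u) = - u.
Proof. intros H. unfold dia. rewrite ccompl, H. auto. Qed.

Lemma LC_iff (x : M) : is_LC x <-> exists u v, is_open u /\ is_open v /\ x = u /\' (- v).
Proof.
  split.
  - intros [b [c ->]]. exists (box M b), (box M (- c)).
    split. apply open_box. split. apply open_box. auto.
  - intros [u [v [Hu [Hv ->]]]]. exists u, (- v).
    rewrite dia_open_compl; auto. rewrite Hu. auto.
Qed.

Lemma open_LC (a : M) : is_open a -> is_LC a.
Proof.
  intros H. apply LC_iff. exists a, (bot M). split; auto. split.
  apply box_bot. rewrite <- (meet_top _ a) at 1. f_equal.
  symmetry. apply le_top. rewrite <- (compl_join M (bot M)). apply jlub.
  apply bot_min. apply le_refl.
Qed.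

Lemma compl_open_LC (v : M) : is_open v -> is_LC (- v).
Proof.
  intros H. apply LC_iff. exists (top M), v. split. apply open_top. split; auto.
  rewrite mC. symmetry. apply meet_top.
Qed.

Lemma LC_meet (x y : M) : is_LC x -> is_LC y -> is_LC (x /\' y).
Proof.
  rewrite !LC_iff. intros [u [v [Hu [Hv ->]]]] [u' [v' [Hu' [Hv' ->]]]].
  exists (u /\' u'), (v \/' v'). split. apply open_meet; auto.
  split. apply open_join; auto.
  rewrite <- demorgan.
  rewrite !mA. f_equal. rewrite <- !mA. f_equal. apply mC.
Qed.

Lemma idP_LC (x : M) : is_LC x -> idP M x = x.
Proof.
  intros H. unfold idP. apply le_antisym.
  - apply sup_le. intros y [_ Hy]. auto.
  - apply sup_ub. split; auto. apply le_refl.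
Qed.
Lemma idP_le (a : M) : idP M a <= a.
Proof. apply sup_le. intros y [_ Hy]. auto. Qed.
Lemma idP_mono (a b : M) : a <= b -> idP M a <= idP M b.
Proof.
  intros H. apply sup_mono. intros x [Hx Hxa]. exists x. split. split; auto.
  eapply tr; eauto. apply le_refl.
Qed.
End MTfacts.

Lemma sup_img_ext (B A : CBA) (F G : A -> B) (S : A -> Prop) :
  (forall x, S x -> F x = G x) -> sup B (img F S) = sup B (img G S).
Proof.
  intros H. apply sup_ext. intros y; split; intros [x [Hx ->]]; exists x;
  split; auto. symmetry; auto.
Qed.

Section Prox.
Variables M N : MTAlgebra.
Variable f : M -> N.
Hypothesis Hf : proximity f.

Lemma prox_meet (a b : M) : f (meet M a b) = meet N (f a) (f b).
Proof. destruct Hf as (_&_&_&_&H&_). apply H. Qed.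
Lemma prox_mono (a b : M) : le M a b -> le N (f a) (f b).
Proof. intros H. rewrite <- (le_meet_eq _ _ _ H), prox_meet. apply mr. Qed.
Lemma prox_open (a : M) : is_open a -> is_open (f a).
Proof. destruct Hf as (H&_). apply H. Qed.
Lemma prox_top : f (top M) = top N.
Proof. destruct Hf as (_&H&_). apply H. Qed.
Lemma prox_P3 (s : list M) : (forall x, In x s -> is_LC x) ->
      f (sup M (fun x => In x s)) = sup N (img f (fun x => In x s)).
Proof. destruct Hf as (_&_&_&_&_&H&_). apply H. Qed.
Lemma prox_P4 (a : M) : f a = sup N (img f (fun x => is_LC x /\ le M x a)).
Proof. destruct Hf as (_&_&_&_&_&_&H). apply H. Qed.
Lemma prox_sup (S : M -> Prop) : (forall x, S x -> is_open x) ->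
      f (sup M S) = sup N (img f S).
Proof. destruct Hf as (_&_&_&H&_). apply H. Qed.

Lemma prox_bot : f (bot M) = bot N.
Proof.
  rewrite <- (sup_empty M), prox_P3. apply le_bot, sup_le. intros y [x [[] _]].
  intros x [].
Qed.

Lemma prox_join (x y : M) : is_LC x -> is_LC y -> f (join M x y) = join N (f x) (f y).
Proof.
  intros Hx Hy. rewrite <- sup_pair, prox_P3, <- sup_pair.
  - apply sup_ext. intros z. split.
    + intros [w [[<-|[<-|[]]] ->]]; simpl; auto.
    + intros [<-|[<-|[]]]; eexists; split; eauto; simpl; auto.
  - intros z [<-|[<-|[]]]; auto.
Qed.

Lemma prox_LC (x : M) : is_LC x -> is_LC (f x).
Proof.
  rewrite LC_iff. intros [u [v [Hu [Hv ->]]]]. apply LC_iff.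
  exists (f u), (f v). split. apply prox_open; auto. split. apply prox_open; auto.
  rewrite prox_meet. f_equal. apply compl_uniq.
  - rewrite <- prox_meet, compl_meet. apply prox_bot.
  - rewrite <- prox_join, compl_join. apply prox_top.
    apply open_LC; auto. apply compl_open_LC; auto.
Qed.
End Prox.

Section Star.
Variables M1 M2 M3 : MTAlgebra.
Variable f : M1 -> M2.
Variable g : M2 -> M3.
Hypothesis Hf : proximity f.
Hypothesis Hg : proximity g.

Lemma star_le (a : M1) : le M3 (star g f a) (g (f a)).
Proof.
  apply sup_le. intros y [x [[_ Hx] ->]]. apply (prox_mono _ _ _ Hg), (prox_mono _ _ _ Hf), Hx.
Qed.
Lemma star_LC (x : M1) : is_LC x -> star g f x = g (f x).
Proof.
  intros H. apply le_antisym. apply star_le. apply sup_ub. exists x.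
  split; auto. split; auto. apply le_refl.
Qed.
Lemma star_mono (a b : M1) : le M1 a b -> le M3 (star g f a) (star g f b).
Proof.
  intros H. apply sup_mono. intros y [x [[Hx Hxa] ->]]. exists (g (f x)).
  split. exists x. split; auto. split; auto. eapply le_trans; eauto. apply le_refl.
Qed.
End Star.

Lemma sup_img_id (B : CBA) (S : B -> Prop) : sup B (img (fun x => x) S) = sup B S.
Proof.
  apply sup_ext. intros y. split. intros [x [Hx ->]]; auto. intros Hy; exists y; auto.
Qed.

Lemma idP_meet (M : MTAlgebra) (a b : M) :
  idP M (meet M a b) = meet M (idP M a) (idP M b).
Proof.
  apply le_antisym.
  - apply mglb; apply idP_mono; (apply ml || apply mr).
  - unfold idP at 2 3. apply meet_sup2_le. intros s t [Hs Hsa] [Ht Htb].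
    apply sup_ub. split. apply LC_meet; auto. apply mmono; auto.
Qed.

Lemma part_a (M : MTAlgebra) : proximity (idP M).
Proof.
  unfold proximity. repeat split.
  - intros a H. rewrite idP_LC; auto. apply open_LC; auto.
  - rewrite idP_LC; auto. apply open_LC, open_top.
  - intros a b _ _. apply idP_meet.
  - intros S H. rewrite idP_LC by (apply open_LC, open_sup; auto).
    rewrite (sup_img_ext M M (idP M) (fun x => x)).
    symmetry; apply sup_img_id. intros x Hx. apply idP_LC, open_LC; auto.
  - apply idP_meet.
  - intros s H. rewrite (sup_img_ext M M (idP M) (fun x => x)) by (intros; apply idP_LC; auto).
    rewrite sup_img_id. apply le_antisym. apply idP_le.
    apply sup_le. intros x Hx. rewrite <- (idP_LC _ x) by auto.
    apply idP_mono, sup_ub; auto.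
  - intros a. rewrite (sup_img_ext M M (idP M) (fun x => x)) by (intros x [Hx _]; apply idP_LC; auto).
    rewrite sup_img_id. reflexivity.
Qed.

Lemma sup_img_comp (A B C : CBA) (F : A -> B) (G : B -> C) (S : A -> Prop) :
  sup C (img G (img F S)) = sup C (img (fun x => G (F x)) S).
Proof.
  apply sup_ext. intros y. split.
  - intros [z [[x [Hx ->]] ->]]. exists x. auto.
  - intros [x [Hx ->]]. exists (F x). split; auto. exists x; auto.
Qed.

Lemma img_list (A B : CBA) (F : A -> B) (l : list A) (y : B) :
  img F (fun x => In x l) y <-> In y (map F l).
Proof.
  rewrite in_map_iff. split; intros [x [H1 H2]]; exists x; auto.
Qed.

Lemma part_b (M1 M2 M3 : MTAlgebra) (f : M1 -> M2) (g : M2 -> M3) :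
  proximity f -> proximity g -> proximity (star g f).
Proof.
  intros Hf Hg.
  assert (P2 : forall a b, star g f (meet M1 a b) = meet M3 (star g f a) (star g f b)).
  { intros a b. apply le_antisym.
    - apply mglb; apply star_mono; auto; (apply ml || apply mr).
    - unfold star at 2 3. apply meet_sup2_le.
      intros s t [x [[Hx Hxa] ->]] [y [[Hy Hyb] ->]].
      rewrite <- (prox_meet _ _ _ Hg), <- (prox_meet _ _ _ Hf).
      apply sup_ub. exists (meet M1 x y). split; auto. split.
      apply LC_meet; auto. apply mmono; auto. }
  unfold proximity. repeat split.
  - intros a H. rewrite star_LC; auto. apply (prox_open _ _ _ Hg), (prox_open _ _ _ Hf); auto.
    apply open_LC; auto.
  - rewrite star_LC; auto. rewrite (prox_top _ _ _ Hf), (prox_top _ _ _ Hg); auto.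
    apply open_LC, open_top.
  - intros; apply P2.
  - intros S H. rewrite star_LC; auto. 2: apply open_LC, open_sup; auto.
    rewrite (prox_sup _ _ _ Hf), (prox_sup _ _ _ Hg), sup_img_comp; auto.
    + apply sup_img_ext. intros x Hx. symmetry. apply star_LC; auto. apply open_LC; auto.
    + intros y [x [Hx ->]]. apply (prox_open _ _ _ Hf); auto.
  - apply P2.
  - intros s H. apply le_antisym.
    + eapply le_trans; [apply star_le; auto|].
      rewrite (prox_P3 _ _ _ Hf); auto.
      rewrite (sup_ext _ _ (fun y => In y (map f s))) by (apply img_list).
      rewrite (prox_P3 _ _ _ Hg).
      * rewrite (sup_img_ext _ _ (star g f) (fun x => g (f x))) by (intros; apply star_LC; auto).
        apply sup_mono. intros y [z [Hz ->]]. exists (g z). split; [|apply le_refl].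
        apply in_map_iff in Hz. destruct Hz as [x [<- Hx]]. exists x. auto.
      * intros y Hy. apply in_map_iff in Hy. destruct Hy as [x [<- Hx]].
        apply (prox_LC _ _ _ Hf); auto.
    + apply sup_le. intros y [x [Hx ->]]. apply star_mono; auto. apply sup_ub; auto.
  - intros a. rewrite (sup_img_ext _ _ (star g f) (fun x => g (f x))).
    reflexivity. intros x [Hx _]. apply star_LC; auto.
Qed.

Lemma star_def (M1 M2 M3 : MTAlgebra) (f : M1 -> M2) (g : M2 -> M3) a :
  star g f a = sup M3 (img (fun x => g (f x)) (fun x => is_LC x /\ le M1 x a)).
Proof. reflexivity. Qed.

Theorem theorem3p15 :
  (* (a) *)
  (forall M : MTAlgebra, proximity (idP M)) /\
  (* (b) *)
  (forall (M1 M2 M3 : MTAlgebra) (f : M1 -> M2) (g : M2 -> M3),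
      proximity f -> proximity g -> proximity (star g f)) /\
  (* (c) *)
  (forall (M1 M2 M3 M4 : MTAlgebra) (f : M1 -> M2) (g : M2 -> M3) (h : M3 -> M4),
      proximity f -> proximity g -> proximity h ->
      forall a : M1,
        star (star h g) f a
          = sup M4 (img (fun x => h (g (f x))) (fun x => is_LC x /\ le M1 x a)) /\
        sup M4 (img (fun x => h (g (f x))) (fun x => is_LC x /\ le M1 x a))
          = star h (star g f) a) /\
  (* (d) *)
  (forall (M N : MTAlgebra) (f : M -> N),
      proximity f -> star (idP N) f = f /\ star f (idP M) = f).
Proof.
  split; [exact part_a|]. split; [exact part_b|]. split.
  - intros M1 M2 M3 M4 f g h Hf Hg Hh a. split.
    + rewrite star_def. apply sup_img_ext. intros x [Hx _].
      apply star_LC; auto. apply (prox_LC _ _ _ Hf); auto.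
    + rewrite star_def. apply sup_img_ext. intros x [Hx _].
      rewrite star_LC; auto.
  - intros M N f Hf. split; apply functional_extensionality; intros a.
    + rewrite star_def, (prox_P4 _ _ _ Hf a). apply sup_img_ext. intros x [Hx _].
      apply idP_LC, (prox_LC _ _ _ Hf); auto.
    + rewrite star_def, (prox_P4 _ _ _ Hf a). apply sup_img_ext. intros x [Hx _].
      rewrite idP_LC; auto.
Qed.
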